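(* Every symmetric log-concave probability measure $\mu$ on $\mathbb R$ satisfies the dilation inequality for $\mathcal K_s^1(\mathbb R)$ with $\kappa=2$, i.e. $\mu^*(K)\ge-2(1-\mu(K))\log(1-\mu(K))$ for every nonempty symmetric open interval $K\subset\mathbb R$.
   Context: $\mathcal K_s^1(\mathbb R)$: nonempty symmetric open convex subsets of $\mathbb R$. For Borel $A\subset\mathbb R$, $\varepsilon\in(0,1)$: $A_\varepsilon:=A\cup\{x:\exists y,\ \int_0^1\mathbf 1_A((1-t)x+ty)\,dt>1-\varepsilon\}$; $\mu^*(A):=\liminf_{\varepsilon\downarrow0}(\mu(A_\varepsilon)-\mu(A))/\varepsilon$. A measure $\mu$ is log-concave if $\mu((1-t)A+tB)\ge\mu(A)^{1-t}\mu(B)^t$ for all compact $A,B$ and $t\in(0,1)$. *)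

(* Defs.v *)
From HB Require Import structures.
From mathcomp Require Import all_boot all_order all_algebra.
From mathcomp Require Import all_classical all_reals all_analysis.
Set Implicit Arguments. Unset Strict Implicit. Unset Printing Implicit Defensive.
Import Order.TTheory GRing.Theory Num.Theory.
Import numFieldNormedType.Exports.
Local Open Scope classical_set_scope.
Local Open Scope ring_scope.

(* Measures on R are measures on the Borel sigma-algebra of R
   (the canonical measurable structure on a realType). *)

Definition symmetric_measure (R : realType) (mu : set R -> \bar R) : Prop :=
  forall A : set R, measurable A -> mu [set - x | x in A] = mu A.

Definition mink_comb (R : realType) (t : R) (A B : set R) : set R :=
  [set (1 - t) * a + t * b | a in A & b in B].

Definition log_concave (R : realType) (mu : set R -> \bar R) : Prop :=
  forall (A B : set R) (t : R), compact A -> compact B -> 0 < t < 1 ->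
    (((fine (mu A)) `^ (1 - t) * (fine (mu B)) `^ t)%:E <= mu (mink_comb t A B))%E.

Definition dil_set (R : realType) (A : set R) (eps : R) : set R :=
  A `|` [set x | exists y : R,
    ((1 - eps)%:E < \int[@lebesgue_measure R]_(t in `[0%R, 1%R])
                      (\1_A ((1 - t) * x + t * y))%:E)%E].

(* mu^*(A) := liminf_{eps -> 0+} (mu(A_eps) - mu(A)) / eps
            = sup_{delta > 0} inf_{0 < eps < delta} ..., eps ranging in (0,1) *)
Definition dil_ratio (R : realType) (mu : set R -> \bar R) (A : set R) (eps : R)
  : \bar R := ((mu (dil_set A eps) - mu A) * (eps^-1)%:E)%E.

Definition mu_star (R : realType) (mu : set R -> \bar R) (A : set R) : \bar R :=
  ereal_sup [set ereal_inf [set dil_ratio mu A eps | eps in [set e : R | 0 < e < Num.min delta 1]]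
            | delta in [set d : R | 0 < d]].

Definition Ks1 (R : realType) (K : set R) : Prop :=
  K !=set0 /\ open K /\ (forall x, K x -> K (- x)) /\
  (forall x y (t : R), K x -> K y -> 0 <= t <= 1 -> K ((1 - t) * x + t * y)).

(* Main.v *)
Require Import Defs.
From HB Require Import structures.
From mathcomp Require Import all_boot all_order all_algebra.
From mathcomp Require Import all_classical all_reals all_analysis.
From mathcomp Require Import measurable_realfun.
From mathcomp Require Import ring lra.
Import Order.TTheory GRing.Theory Num.Theory.
Import numFieldNormedType.Exports.
Local Open Scope classical_set_scope.
Local Open Scope ring_scope.

Section S.
Variable R : realType.

Lemma meas_aff (x y : R) (A : set R) : measurable A ->
  measurable ([set t | A ((1 - t) * x + t * y)]).
Proof.
move=> mA.
have mf : measurable_fun setT (fun t : R => (1 - t) * x + t * y).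
  apply: measurable_funD; apply: measurable_funM => //.
  apply: measurable_funB => //.
have := mf measurableT _ mA. by rewrite setTI.
Qed.

Local Notation lam := (@lebesgue_measure R).

Lemma phiE (x y : R) (A : set R) : measurable A ->
  (\int[lam]_(t in `[0%R, 1%R]) (\1_A ((1 - t) * x + t * y))%:E)%E =
  lam ([set t | A ((1 - t) * x + t * y)] `&` `[0%R, 1%R]).
Proof.
move=> mA; rewrite -integral_indic; last exact: meas_aff.
apply: eq_integral => t _. congr (_%:E). rewrite /indic. done.
Qed.

Lemma phi_le (x y : R) (A : set R) (al be : R) : measurable A -> al <= be ->
  (forall t, 0 <= t <= 1 -> A ((1 - t) * x + t * y) -> al <= t <= be) ->
  (\int[lam]_(t in `[0%R, 1%R]) (\1_A ((1 - t) * x + t * y))%:E <= (be - al)%:E)%E.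
Proof.
move=> mA ab H; rewrite phiE //.
apply: (@le_trans _ _ (lam `[al, be])).
  apply: le_measure; rewrite ?inE.
  - apply: measurableI => //; exact: meas_aff.
  - exact: measurable_itv.
  move=> t [/= At]; rewrite in_itv /= => t01; rewrite in_itv /=; exact: H.
rewrite lebesgue_measure_itv /= lte_fin.
case: ltP => // _; rewrite lee_fin subr_ge0 //.
Qed.

Lemma phi_ge (x y : R) (A : set R) (al be : R) : measurable A -> 0 <= al -> al <= be -> be <= 1 ->
  (forall t, al < t < be -> A ((1 - t) * x + t * y)) ->
  ((be - al)%:E <= \int[lam]_(t in `[0%R, 1%R]) (\1_A ((1 - t) * x + t * y))%:E)%E.
Proof.
move=> mA a0 ab b1 H; rewrite phiE //.
apply: (@le_trans _ _ (lam `]al, be[)).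
  rewrite lebesgue_measure_itv /= lte_fin.
  have [ab'|ab'] := ltP al be; first by [].
  have -> : be = al by apply/eqP; rewrite eq_le ab ab'.
  by rewrite subrr.
apply: le_measure; rewrite ?inE.
- exact: measurable_itv.
- apply: measurableI => //; exact: meas_aff.
move=> t; rewrite /= in_itv /= => /andP[hat tb].
split; first by apply: H; rewrite hat tb.
rewrite in_itv /=; apply/andP; split.
  exact: le_trans a0 (ltW hat).
exact: le_trans (ltW tb) b1.
Qed.
End S.

Section S2.
Variable R : realType.
Local Notation lam := (@lebesgue_measure R).
Local Notation phi A x y := (\int[lam]_(t in `[0%R, 1%R]) (\1_A ((1 - t) * x + t * y))%:E)%E.

Lemma itv_oppE (a u : R) : (- u \in `]-a, a[) = (u \in `]-a, a[).
Proof.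
rewrite !in_itv /=; apply/idP/idP => /andP[h1 h2]; apply/andP; split; lra.
Qed.

Lemma phi_sym (a x y : R) : phi `]-a, a[ (- x) (- y) = phi `]-a, a[ x y.
Proof.
apply: eq_integral => t _; congr (_%:E); rewrite /indic.
have -> : (1 - t) * - x + t * - y = - ((1 - t) * x + t * y) by ring.
by rewrite !mem_setE itv_oppE.
Qed.

Lemma phi_lb (a x : R) : 0 < a -> a <= x ->
  ((2 * a / (x + a))%:E <= phi `]-a, a[ x (- a))%E.
Proof.
move=> a0 ax.
have xa0 : 0 < x + a by lra.
have -> : 2 * a / (x + a) = 1 - (x - a) / (x + a) by field; lra.
apply: phi_ge => //.
- by apply: divr_ge0; lra.
- by rewrite ler_pdivrMr //; lra.
move=> t /andP[h1 h2]; rewrite /= in_itv /=.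
move: h1; rewrite ltr_pdivrMr // => h1.
apply/andP; split; nra.
Qed.

Lemma phi_ub (a x y : R) : 0 < a -> a <= x ->
  (phi `]-a, a[ x y <= (2 * a / (x + a))%:E)%E.
Proof.
move=> a0 ax.
have xa0 : 0 < x + a by lra.
have [ya|ya] := lerP (- a) y.
  have -> : 2 * a / (x + a) = 1 - (x - a) / (x + a) by field; lra.
  apply: phi_le => //.
    by rewrite ler_pdivrMr //; lra.
  move=> t /andP[t0 t1]; rewrite /= in_itv /= => /andP[h1 h2].
  rewrite t1 andbT ler_pdivrMr //; nra.
have d0 : 0 < x - y by lra.
apply: (@le_trans _ _ (((x + a) / (x - y) - (x - a) / (x - y))%:E)).
  apply: phi_le => //.
    by rewrite ler_pM2r ?invr_gt0 //; lra.
  move=> t /andP[t0 t1]; rewrite /= in_itv /= => /andP[h1 h2].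
  by rewrite ler_pdivrMr // ler_pdivlMr //; apply/andP; split; nra.
rewrite lee_fin.
have -> : (x + a) / (x - y) - (x - a) / (x - y) = 2 * a / (x - y) by field; lra.
rewrite ler_pdivrMr // mulrAC ler_pdivlMr //; nra.
Qed.

Lemma key_lt (a eps z : R) : 0 < a -> 0 < eps < 1 -> a <= z ->
  z < a * (1 + eps) / (1 - eps) -> 1 - eps < 2 * a / (z + a).
Proof.
move=> a0 /andP[e0 e1] az.
rewrite ltr_pdivlMr; last lra.
rewrite ltr_pdivlMr; last lra.
nra.
Qed.

Lemma key_le (a eps z : R) : 0 < a -> 0 < eps < 1 -> a <= z ->
  a * (1 + eps) / (1 - eps) <= z -> 2 * a / (z + a) <= 1 - eps.
Proof.
move=> a0 /andP[e0 e1] az.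
rewrite ler_pdivrMr; last lra.
rewrite ler_pdivrMr; last lra.
nra.
Qed.

Lemma dilE (a eps : R) : 0 < a -> 0 < eps < 1 ->
  dil_set `]-a, a[ eps = [set` `]-(a * (1 + eps) / (1 - eps)), a * (1 + eps) / (1 - eps)[].
Proof.
move=> a0 he; have /andP[e0 e1] := he.
set b := a * (1 + eps) / (1 - eps).
have ab : a <= b.
  rewrite /b ler_pdivlMr; last lra.
  nra.
rewrite /dil_set; apply/seteqP; split.
- move=> z [|[y hy]].
    rewrite /= !in_itv /= => /andP[h1 h2]; apply/andP; split; lra.
  rewrite /= in_itv /=; apply/andP; split.
    rewrite ltNge; apply/negP => zb.
    have hz : a <= - z by lra.
    have := @phi_ub a (-z) (-y) a0 hz; rewrite phi_sym => hu.
    have := @key_le a eps (-z) a0 he hz; rewrite -/b => /(_ ltac:(lra)) hk.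
    have := lt_le_trans hy hu; rewrite lte_fin; lra.
  rewrite ltNge; apply/negP => zb.
  have hz : a <= z by lra.
  have := @phi_ub a z y a0 hz => hu.
  have := @key_le a eps z a0 he hz; rewrite -/b => /(_ zb) hk.
  have := lt_le_trans hy hu; rewrite lte_fin; lra.
- move=> z; rewrite /= in_itv /= => /andP[h1 h2].
  have [za|za] := lerP a z.
    right; exists (- a).
    apply: lt_le_trans (@phi_lb a z a0 za); rewrite lte_fin.
    exact: @key_lt a eps z a0 he za h2.
  have [za'|za'] := lerP z (- a).
    right; exists a.
    have hz : a <= - z by lra.
    rewrite -(phi_sym a z a).
    apply: lt_le_trans (@phi_lb a (-z) a0 hz); rewrite lte_fin.
    apply: (@key_lt a eps (-z) a0 he hz); rewrite -/b; lra.
  by left; rewrite /= in_itv /= za za'.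
Qed.
End S2.

Section S5.
Variable R : realType.

Lemma ratio_lb (g h eps s : R) : 0 <= g -> 2 * g <= 1 -> 0 < eps <= 1 / 2 ->
  s = 2 * eps / (1 - eps) ->
  h <= g * expR (s * ln (2 * g)) ->
  2 * (2 * g) * (- ln (2 * g)) / (1 + (- ln (2 * g)) * s) <= 2 * (g - h) / eps.
Proof.
move=> g0 g1 /andP[e0 e1] sE hb.
set M := - ln (2 * g).
have M0 : 0 <= M by rewrite /M oppr_ge0 ln_le0.
have hs : 2 * eps <= s.
  by rewrite sE ler_pdivlMr; [nra | lra].
have s0 : 0 <= s by lra.
set y := M * s.
have y0 : 0 <= y by rewrite /y mulr_ge0.
have P0 : 0 < 1 + y by lra.
have ey : expR (s * ln (2 * g)) <= (1 + y)^-1.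
  have -> : s * ln (2 * g) = - y by rewrite /y /M; ring.
  rewrite expRN lef_pV2 ?posrE ?expR_gt0 //.
  exact: expR_ge1Dx.
have hP : h * (1 + y) <= g.
  have : h <= g * (1 + y)^-1 by apply: le_trans hb _; rewrite ler_wpM2l.
  by rewrite ler_pdivlMr.
rewrite ler_pdivrMr //.
have -> : 2 * (g - h) / eps * (1 + y) = (2 * (g - h) * (1 + y)) / eps.
  by rewrite mulrAC.
rewrite ler_pdivlMr //.
have gM : 0 <= g * M by rewrite mulr_ge0.
have k : 0 <= g * M * (s - 2 * eps) by rewrite mulr_ge0 // subr_ge0.
rewrite /y in hP *.
nra.
Qed.

Lemma fin_arith (q M eps e s : R) : 0 <= q -> 0 <= M -> 0 < eps <= 1 / 2 -> 0 < e ->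
  s = 2 * eps / (1 - eps) -> eps * (8 * q * M ^+ 2 + 1) < e ->
  2 * q * M - e <= 2 * q * M / (1 + M * s).
Proof.
move=> q0 M0 /andP[e0 e1] ep sE he.
have hs : s <= 4 * eps.
  by rewrite sE ler_pdivrMr; [nra | lra].
have s0 : 0 <= s by rewrite sE divr_ge0; lra.
set y := M * s.
have y0 : 0 <= y by rewrite /y mulr_ge0.
have y4 : y <= 4 * M * eps by rewrite /y; nra.
have P0 : 0 < 1 + y by lra.
rewrite ler_pdivlMr //.
have qM : 0 <= q * M by rewrite mulr_ge0.
have h1 : 2 * q * M * y <= e.
  have : 2 * q * M * y <= 8 * q * M ^+ 2 * eps.
    have := ler_wpM2l qM y4; rewrite expr2; nra.
  nra.
nra.
Qed.
End S5.

Section S6.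
Variable R : realType.

Lemma Ks1_conv (K : set R) (x z : R) : Ks1 K -> K x -> 0 < x -> `|z| <= x -> K z.
Proof.
move=> [_ [_ [sK cK]]] Kx x0 zx.
have := cK (- x) x ((z + x) / (2 * x)) (sK _ Kx) Kx.
have -> : (1 - (z + x) / (2 * x)) * - x + (z + x) / (2 * x) * x = z by field; lra.
apply; move: zx; rewrite ler_norml => /andP[h1 h2].
apply/andP; split.
  by apply: divr_ge0; lra.
by rewrite ler_pdivrMr; lra.
Qed.

Lemma Ks1_cases (K : set R) : Ks1 K ->
  K = setT \/ exists a : R, 0 < a /\ K = [set` `]-a, a[].
Proof.
move=> hK; have [[x0 Kx0] [oK [sK cK]]] := hK.
have K0 : K 0.
  have := cK x0 (- x0) (1 / 2) Kx0 (sK _ Kx0).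
  have -> : (1 - 1 / 2) * x0 + 1 / 2 * - x0 = 0 :> R by field.
  by apply; apply/andP; split; lra.
have [ub|nub] := pselect (has_ubound K); last first.
  left; apply/seteqP; split => // z _.
  have /existsNP [x /not_implyP [Kx xz]] : ~ (forall x, K x -> x <= `|z|).
    by move=> h; apply: nub; exists `|z|.
  have xz' : `|z| < x by rewrite ltNge; apply/negP.
  apply: (@Ks1_conv K x z hK Kx); last exact: ltW.
  exact: le_lt_trans (normr_ge0 _) xz'.
have hs : has_sup K by split => //; exists 0.
set a := sup K.
have ubK : ubound K a := sup_upper_bound hs.
have aK : ~ K a.
  move=> Ka.
  have : nbhs a K by move: oK; rewrite openE => /(_ a Ka).
  case/nbhs_ballP => e /= e0 sub.
  have : K (a + e / 2).
    apply: sub; rewrite ball_itv /= in_itv /=. apply/andP; split; lra.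
  move=> /ubK; lra.
have a0 : 0 < a.
  have := ubK 0 K0; rewrite le_eqVlt => /orP[/eqP a0|//].
  by exfalso; apply: aK; rewrite -a0.
right; exists a; split => //.
apply/seteqP; split => z.
- move=> Kz; rewrite /= in_itv /=.
  have h1 := ubK _ Kz; have h2 := ubK _ (sK _ Kz).
  have z1 : z != a by apply/eqP => za; apply: aK; rewrite -za.
  have z2 : - z != a by apply/eqP => za; apply: aK; rewrite -za; exact: sK.
  apply/andP; split.
    rewrite lt_neqAle; apply/andP; split; last lra.
    by apply: contra z2 => /eqP <-; rewrite opprK.
  by rewrite lt_neqAle z1.
- rewrite /= in_itv /= => /andP[h1 h2].
  have e0 : 0 < a - `|z| by rewrite subr_gt0 ltr_norml h1 h2.
  have [x Kx hx] := sup_adherent e0 hs.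
  apply: (@Ks1_conv K x z hK Kx); last by rewrite -/a in hx; lra.
  rewrite -/a in hx; have := normr_ge0 z; lra.
Qed.
End S6.

Section S3.
Variable R : realType.
Variable mu : probability R R.
Local Notation m X := (fine (mu X)).

Lemma fin_mu (X : set R) : measurable X -> mu X \is a fin_num.
Proof.
move=> mX; rewrite ge0_fin_numE //.
exact: le_lt_trans (probability_le1 mu mX) (ltry _).
Qed.

Lemma muE (X : set R) : measurable X -> mu X = (m X)%:E.
Proof. by move=> mX; rewrite fineK // fin_mu. Qed.

Lemma m_ge0 (X : set R) : 0 <= m X.
Proof. exact: fine_ge0. Qed.

Lemma m_le (X Y : set R) : measurable X -> measurable Y -> X `<=` Y -> m X <= m Y.
Proof.
move=> mX mY XY; rewrite -lee_fin -!muE //.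
by apply: le_measure => //; rewrite inE.
Qed.

Lemma mU (X Y : set R) : measurable X -> measurable Y -> X `&` Y = set0 ->
  m (X `|` Y) = m X + m Y.
Proof.
move=> mX mY XY.
have -> : mu (X `|` Y) = mu X + mu Y by rewrite measureU.
by rewrite fineD // fin_mu.
Qed.

Lemma mT : m setT = 1.
Proof. by rewrite probability_setT. Qed.


Hypothesis msym : symmetric_measure mu.

Local Notation G x := (m [set` `[x, +oo[]).

Lemma m_sym (x : R) : m [set` `]-oo, - x]] = G x.
Proof.
rewrite -(@msym [set` `[x, +oo[] (measurable_itv _)); congr (fine (mu _)).
apply/seteqP; split => z /=.
- rewrite in_itv /= => hz; exists (- z); last by rewrite opprK.
  by rewrite in_itv /= andbT lerNr.
- by move=> [y]; rewrite !in_itv /= ?andbT => hy <-; rewrite lerN2.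
Qed.

Lemma G_ge0 x : 0 <= G x. Proof. exact: m_ge0. Qed.

Lemma G_le1 x : G x <= 1.
Proof. rewrite -mT; apply: m_le => //. Qed.

Lemma G_anti x y : x <= y -> G y <= G x.
Proof.
move=> xy; apply: m_le => // z /=; rewrite !in_itv /= ?andbT => h.
exact: le_trans h.
Qed.

Lemma G0 : 1 / 2 <= G 0.
Proof.
have H : m setT = m [set` `]-oo, 0[] + G 0.
  rewrite -mU //; last first.
    apply/seteqP; split => z //= [] ; rewrite !in_itv /= ?andbT => h1 h2; lra.
  congr (fine (mu _)); apply/seteqP; split => z //= _.
  rewrite !in_itv /= ?andbT; case: (ltP z 0) => _; [left|right] => //.
have H2 : m [set` `]-oo, 0[] <= G 0.
  rewrite -m_sym oppr0; apply: m_le => // z /=; rewrite !in_itv /= ?andbT; exact: ltW.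
rewrite mT in H; lra.
Qed.

Lemma m_itv (b : R) : 0 < b -> m [set` `]-b, b[] = 1 - 2 * G b.
Proof.
move=> b0.
have H : m setT = m [set` `]-b, b[] + (m [set` `]-oo, - b]] + G b).
  rewrite -mU //; last first.
    apply/seteqP; split => z //= [] ; rewrite !in_itv /= ?andbT => h1 h2; lra.
  rewrite -mU //; last first.
    apply/seteqP; split => z //= [] ; rewrite !in_itv /= ?andbT => /andP[h1 h2] [] h3; lra.
  - exact: measurableU.
  congr (fine (mu _)); apply/seteqP; split => z //= _.
  rewrite !in_itv /= ?andbT.
  case: (ltP (- b) z) => h1; last by right; left.
  case: (ltP z b) => h2; first by left.
  by right; right.
rewrite mT m_sym in H; lra.
Qed.


Lemma mink_seg (t x0 x1 c : R) : 0 < t < 1 -> 0 <= c ->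
  mink_comb t [set` `[x0, x0 + c]] [set` `[x1, x1 + c]] =
  [set` `[(1 - t) * x0 + t * x1, (1 - t) * x0 + t * x1 + c]].
Proof.
move=> /andP[t0 t1] c0; rewrite /mink_comb; apply/seteqP; split => w /=.
- move=> [a]; rewrite /= in_itv /= => /andP[a1 a2] [b]; rewrite /= in_itv /= => /andP[b1 b2] <-.
  rewrite in_itv /=; apply/andP; split; nra.
- rewrite in_itv /= => /andP[w1 w2].
  exists (x0 + (w - ((1 - t) * x0 + t * x1))); first by rewrite /= in_itv /=; apply/andP; split; lra.
  exists (x1 + (w - ((1 - t) * x0 + t * x1))); first by rewrite /= in_itv /=; apply/andP; split; lra.
  ring.
Qed.

Lemma G_cvg (x : R) : (fun n : nat => m [set` `[x, x + n%:R]]) @ \oo --> G x.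
Proof.
have mF : forall n : nat, measurable [set` `[x, x + n%:R]] by move=> n; exact: measurable_itv.
have U : \bigcup_n [set` `[x, x + n%:R]] = [set` `[x, +oo[].
  apply/seteqP; split => y /=.
    by move=> [n _] /=; rewrite !in_itv /= => /andP[h _]; rewrite ?andbT.
  rewrite in_itv /= andbT => xy.
  exists (Num.truncn (y - x)).+1 => //=.
  rewrite in_itv /= xy /=.
  have := truncnS_gt (y - x); lra.
have nd : nondecreasing_seq (fun n : nat => [set` `[x, x + n%:R]]).
  move=> n k nk; apply/subsetPset => y /=; rewrite !in_itv /= => /andP[h1 h2]; rewrite h1 /=.
  apply: le_trans h2 _; rewrite lerD2l ler_nat //.
have := @nondecreasing_cvg_mu _ _ _ mu _ mF _ nd; rewrite U => /(_ (measurable_itv _)).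
move=> h0; move: h0; rewrite [X in _ --> X]muE; last exact: measurable_itv.
move=> h0; have [_ h] := (fine_cvgP _ _).1 h0.
exact: h.
Qed.


Hypothesis mlc : log_concave mu.

Lemma lc_tail (t x0 x1 : R) : 0 < t < 1 -> 0 < G x0 -> 0 < G x1 ->
  (1 - t) * ln (G x0) + t * ln (G x1) <= ln (G ((1 - t) * x0 + t * x1)).
Proof.
move=> ht g0 g1.
set z := (1 - t) * x0 + t * x1.
pose u := fun n : nat => m [set` `[x0, x0 + n%:R]].
pose v := fun n : nat => m [set` `[x1, x1 + n%:R]].
have hb n : u n `^ (1 - t) * v n `^ t <= G z.
  have := mlc _ _ _ (@segment_compact _ x0 (x0 + n%:R)) (@segment_compact _ x1 (x1 + n%:R)) ht.
  rewrite mink_seg // -/z => h.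
  rewrite -lee_fin; apply: le_trans h _.
  rewrite -(@muE _ (measurable_itv `[z, +oo[)).
  apply: le_measure; rewrite ?inE; try exact: measurable_itv.
  by move=> y /=; rewrite !in_itv /= => /andP[-> _].
have up : \forall n \near \oo, 0 < u n by exact: cvgr_gt (G_cvg x0) _ g0.
have vp : \forall n \near \oo, 0 < v n by exact: cvgr_gt (G_cvg x1) _ g1.
have lim1 : (fun n => (1 - t) * ln (u n) + t * ln (v n)) @ \oo -->
    (1 - t) * ln (G x0) + t * ln (G x1).
  apply: cvgD; apply: cvgM; try exact: cvg_cst.
    exact: (cvg_comp _ _ (G_cvg x0) (continuous_ln g0)).
  exact: (cvg_comp _ _ (G_cvg x1) (continuous_ln g1)).
apply: (cvgr_to_le lim1); near=> n.
have un : 0 < u n by near: n.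
have vn : 0 < v n by near: n.
have pp : 0 < u n `^ (1 - t) * v n `^ t by rewrite mulr_gt0 // powR_gt0.
rewrite -(ln_powR (u n)) -(ln_powR (v n)) -lnM ?posrE ?powR_gt0 //.
rewrite ler_ln ?posrE //; last exact: lt_le_trans pp (hb n).
Unshelve. all: by end_near.
Qed.


Lemma h_bound (a r : R) : 0 < a -> 1 < r ->
  G (a * r) <= G a * expR ((r - 1) * ln (2 * G a)).
Proof.
move=> a0 r1.
have ga0 := G_ge0 a.
have [hp|hn] := ltP 0 (G (a * r)); last first.
  apply: le_trans hn _; apply: mulr_ge0 => //; exact: ltW (expR_gt0 _).
have hle : G (a * r) <= G a by apply: G_anti; rewrite ler_peMr //; lra.
have gp : 0 < G a by exact: lt_le_trans hp hle.
have t01 : 0 < r^-1 < 1.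
  by rewrite invr_gt0 invf_lt1 ?r1 ?andbT //; lra.
have g0p : 0 < G 0 by apply: lt_le_trans G0; lra.
have := @lc_tail (r^-1) 0 (a * r) t01 g0p hp.
have -> : (1 - r^-1) * 0 + r^-1 * (a * r) = a by field; lra.
have l0 : - ln 2 <= ln (G 0).
  rewrite -lnV ?posrE //; rewrite ler_ln ?posrE ?invr_gt0 //.
  by have := G0; rewrite div1r.
move=> H.
have H2 : ln (G (a * r)) <= ln (G a) + (r - 1) * ln (2 * G a).
  rewrite lnM ?posrE //.
  have H3 : r^-1 * ln (G (a * r)) <= ln (G a) + (1 - r^-1) * ln 2.
    have : (1 - r^-1) * (- ln 2) <= (1 - r^-1) * ln (G 0).
      by rewrite ler_pM2l //; lra.
    lra.
  have r0 : 0 < r by lra.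
  have -> : ln (G (a * r)) = r * (r^-1 * ln (G (a * r))) by field; lra.
  have -> : ln (G a) + (r - 1) * (ln 2 + ln (G a)) = r * (ln (G a) + (1 - r^-1) * ln 2).
    by field; lra.
  by rewrite ler_pM2l.
have -> : G a * expR ((r - 1) * ln (2 * G a)) = expR (ln (G a) + (r - 1) * ln (2 * G a)).
  by rewrite expRD lnK // posrE.
by rewrite -ler_ln ?posrE ?expR_gt0 // expRK.
Qed.


Lemma mu_star_lb (K : set R) (T : R) :
  (forall e, 0 < e -> exists2 d, 0 < d & forall eps, 0 < eps < Num.min d 1 ->
     ((T - e)%:E <= dil_ratio mu K eps)%E) ->
  (T%:E <= mu_star mu K)%E.
Proof.
move=> H; apply/lee_subgt0Pr => e e0.
have [d d0 Hd] := H e e0.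
apply: (@le_trans _ _ (ereal_inf [set dil_ratio mu K eps | eps in [set e1 : R | 0 < e1 < Num.min d 1]])).
  apply: le_ereal_inf_tmp => y [eps heps <-]; rewrite -EFinB; exact: Hd.
by apply: ereal_sup_ubound; exists d.
Qed.

Lemma main_lc (K : set R) : Ks1 K ->
  ((- 2 * (1 - fine (mu K)) * ln (1 - fine (mu K)))%:E <= mu_star mu K)%E.
Proof.
move=> hK; case: (@Ks1_cases R K hK) => [->|[a [a0 ->]]].
  rewrite probability_setT /= subrr mulr0 mul0r.
  apply: mu_star_lb => e e0; exists 1 => // eps _.
  rewrite /dil_ratio /dil_set setTU probability_setT subee // mul0e lee_fin; lra.
set g := G a.
have mK : m [set` `]-a, a[] = 1 - 2 * g by exact: m_itv.
rewrite mK.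
have -> : 1 - (1 - 2 * g) = 2 * g by ring.
have g0 : 0 <= g := G_ge0 a.
have q1 : 2 * g <= 1 by have := m_ge0 [set` `]-a, a[]; rewrite mK; lra.
set M := - ln (2 * g).
have M0 : 0 <= M by rewrite /M oppr_ge0 ln_le0.
have -> : - 2 * (2 * g) * ln (2 * g) = 2 * (2 * g) * M by rewrite /M; ring.
apply: mu_star_lb => e e0.
have P0 : 0 < 8 * (2 * g) * M ^+ 2 + 1.
  have : 0 <= 8 * (2 * g) * M ^+ 2 by rewrite !mulr_ge0 // ?sqr_ge0; lra.
  lra.
exists (Num.min (1 / 2) (e / (8 * (2 * g) * M ^+ 2 + 1))).
  by rewrite lt_min; apply/andP; split; [lra | exact: divr_gt0].
move=> eps /andP[ep]; rewrite !lt_min => /andP[/andP[h12 he] h1].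
have he' : 0 < eps < 1 by rewrite ep h1.
have eh : 0 < eps <= 1 / 2 by rewrite ep ltW.
have eP : eps * (8 * (2 * g) * M ^+ 2 + 1) < e by rewrite -ltr_pdivlMr.
set r := (1 + eps) / (1 - eps).
have r1 : 1 < r by rewrite /r ltr_pdivlMr; lra.
have b0 : 0 < a * (1 + eps) / (1 - eps) by rewrite -mulrA mulr_gt0 // divr_gt0 //; lra.
rewrite /dil_ratio (@dilE R a eps a0 he').
rewrite (@muE [set` `]-a, a[] (measurable_itv _)).
rewrite (@muE [set` `]-(a * (1 + eps) / (1 - eps)), a * (1 + eps) / (1 - eps)[] (measurable_itv _)).
rewrite -EFinB -EFinM lee_fin.
have E : (m [set` `]-(a * (1 + eps) / (1 - eps)), a * (1 + eps) / (1 - eps)[] - m [set` `]-a, a[]) * eps^-1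
    = 2 * (g - G (a * r)) / eps.
  by rewrite !m_itv // -/g /r mulrA; ring.
set s := 2 * eps / (1 - eps).
have rs : r - 1 = s by rewrite /r /s; field; lra.
have hb := @h_bound a r a0 r1; rewrite rs -/g in hb.
have H : 2 * (2 * g) * M - e <= 2 * (g - G (a * r)) / eps.
  apply: le_trans (@fin_arith R (2 * g) M eps e s _ M0 eh e0 erefl eP) _.
    lra.
  exact: (@ratio_lb R g (G (a * r)) eps s g0 q1 eh erefl hb).
apply: (le_trans H); rewrite -E; exact: lexx.
Qed.

End S3.

Theorem propositionp (R : realType) (mu : probability R R) :
  symmetric_measure mu -> log_concave mu ->
  forall K : set R, Ks1 K ->
    ((- 2 * (1 - fine (mu K)) * ln (1 - fine (mu K)))%:E <= mu_star mu K)%E.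
Proof.
move=> msym mlc K hK; exact: (@main_lc R mu msym mlc K hK).
Qed.
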